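(* For every finite non-empty set $S \subseteq \mathbb{R}^m$, we have \[ |\mathcal{D}(\mathrm{pyr}(S))| = |\mathcal{D}(S)| + 2|S| \quad\text{and}\quad \Delta(\mathcal{D}(\mathrm{pyr}(S))) = \Delta(\mathcal{D}(S)). \]
   Context: For a finite set $S\subseteq\mathbb{R}^m$, its difference set is $\mathcal{D}(S) = S - S = \{a-b : a,b\in S\}$, and its pyramid is $\mathrm{pyr}(S) = (S\times\{0\})\cup\{e_{m+1}\}\subseteq\mathbb{R}^{m+1}$, where $e_{m+1}$ is the $(m+1)$-st unit vector. For a finite set $T\subseteq\mathbb{R}^d$, $\Delta(T) = \max\{|\det(T')| : T'\subseteq T,\ |T'|=d\}$, where $\det(T')$ is the determinant of the $d\times d$ matrix whose columns are the elements of $T'$ (so $\Delta(\mathcal{D}(S))$ is taken in dimension $m$ and $\Delta(\mathcal{D}(\mathrm{pyr}(S)))$ in dimension $m+1$). *)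

(* Defs.v *)
From HB Require Import structures.
From mathcomp Require Import all_boot all_order all_algebra.
From mathcomp Require Import finmap.
From mathcomp Require Import reals.
Set Implicit Arguments. Unset Strict Implicit. Unset Printing Implicit Defensive.
Import Order.TTheory GRing.Theory Num.Theory.
Local Open Scope ring_scope.
Local Open Scope fset_scope.

Definition diffset (R : realType) (m : nat) (S : {fset 'rV[R]_m}) : {fset 'rV[R]_m} :=
  [fset a - b | a in S, b in S].

Definition pyr (R : realType) (m : nat) (S : {fset 'rV[R]_m}) : {fset 'rV[R]_(m + 1)} :=
  [fset row_mx v (0 : 'rV[R]_1) | v in S] `|` [fset row_mx (0 : 'rV[R]_m) (const_mx 1)].

(* Delta(T) = max |det T'| over d-element subsets T' of T (columns = elements).
   Enumerated via injective maps 'I_d -> T (column order does not affect |det|);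
   an empty maximum (|T| < d) is 0. *)
Definition Delta (R : realType) (d : nat) (T : {fset 'rV[R]_d}) : R :=
  \big[Order.max/0]_(f : {ffun 'I_d -> T} | injectiveb f)
     `|\det (\matrix_(i < d, j < d) (val (f j)) 0 i)|.

(* Main.v *)
Require Import Defs.
From HB Require Import structures.
From mathcomp Require Import all_boot all_order all_algebra.
From mathcomp Require Import finmap.
From mathcomp Require Import reals.
From mathcomp Require Import perm.
Import Order.TTheory GRing.Theory Num.Theory.
Local Open Scope ring_scope.
Local Open Scope fset_scope.

Section S.
Variable R : realType.
Variable m : nat.
Implicit Types S : {fset 'rV[R]_m}.

Lemma memDS n (S : {fset 'rV[R]_n}) d :
  (d \in diffset S) <-> exists a b, [/\ a \in S, b \in S & d = a - b].
Proof.
split.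
  by move=> /imfset2P [a aS [b bS ->]]; exists a, b.
by move=> [a [b [aS bS ->]]]; apply/imfset2P; exists a => //; exists b.
Qed.

Lemma memDS1 n (S : {fset 'rV[R]_n}) d : d \in diffset S -> exists a b, [/\ a \in S, b \in S & d = a - b].
Proof. by move=> H; apply/memDS. Qed.

Lemma memP S p : p \in pyr S ->
  (exists2 v, v \in S & p = row_mx v (const_mx 0)) \/ p = row_mx 0 (const_mx 1).
Proof.
case/fsetUP => [/imfsetP [v vS ->]|/fset1P ->]; last by right.
left; exists v => //; congr row_mx; apply/matrixP => i j; rewrite !mxE.
Qed.

Lemma memP1 S v : v \in S -> row_mx v (const_mx 0) \in pyr S.
Proof.
move=> vS; apply/fsetUP; left; apply/imfsetP; exists v => //.
Qed.

Lemma memP2 S : row_mx 0 (const_mx 1) \in pyr S.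
Proof. by apply/fsetUP; right; apply/fset1P. Qed.

Definition A1 S := [fset row_mx d (const_mx 0 : 'rV[R]_1) | d in diffset S].
Definition A2 S := [fset row_mx (- v) (const_mx 1 : 'rV[R]_1) | v in S].
Definition A3 S := [fset row_mx v (const_mx (-1) : 'rV[R]_1) | v in S].

Lemma subrow (a b : 'rV[R]_m) (c d : 'rV[R]_1) :
  row_mx a c - row_mx b d = row_mx (a - b) (c - d).
Proof. by rewrite opp_row_mx add_row_mx. Qed.

Lemma constB (a b : R) : const_mx a - const_mx b = const_mx (a - b) :> 'rV[R]_1.
Proof. by apply/matrixP => i j; rewrite !mxE. Qed.

Lemma DPeq S : S != fset0 -> diffset (pyr S) = A1 S `|` A2 S `|` A3 S.
Proof.
move=> /fset0Pn [v0 v0S].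
apply/fsetP => u; apply/idP/idP.
  move=> /memDS1 [a [b [aP bP ->]]].
  case/memP: aP => [[v vS ->]|->]; case/memP: bP => [[w wS ->]|->];
    rewrite subrow constB.
  - apply/fsetUP; left; apply/fsetUP; left; apply/imfsetP; exists (v - w).
      by apply/memDS; exists v, w.
    by rewrite subrr.
  - apply/fsetUP; right; apply/imfsetP; exists v => //.
    by rewrite subr0 sub0r.
  - apply/fsetUP; left; apply/fsetUP; right; apply/imfsetP; exists w => //.
    by rewrite subr0 sub0r.
  - apply/fsetUP; left; apply/fsetUP; left; apply/imfsetP; exists (v0 - v0).
      by apply/memDS; exists v0, v0.
    by rewrite !subrr.
case/fsetUP => [/fsetUP [] | ] /imfsetP [v vS ->]; apply/memDS.
- case/memDS1: vS => [a [b [aS bS ->]]].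
  exists (row_mx a (const_mx 0)), (row_mx b (const_mx 0)); split; try exact: memP1.
  by rewrite subrow constB subrr.
- exists (row_mx 0 (const_mx 1)), (row_mx v (const_mx 0)); split; try exact: memP1; try exact: memP2.
  by rewrite subrow constB subr0 sub0r.
- exists (row_mx v (const_mx 0)), (row_mx 0 (const_mx 1)); split; try exact: memP1; try exact: memP2.
  by rewrite subrow constB subr0 sub0r.
Qed.

Lemma disj (A B : {fset 'rV[R]_(m + 1)}) :
  (forall u, u \in A -> u \in B -> False) -> #|` A `|` B| = (#|` A| + #|` B|)%N.
Proof.
move=> H; rewrite -cardfsUI.
suff -> : A `&` B = fset0 by rewrite cardfs0 addn0.
apply/fsetP => u; rewrite inE; rewrite ?inE; apply/negbTE/negP => /andP [uA uB].
exact: H uA uB.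
Qed.

Lemma const_neq (a b : R) : a != b -> const_mx a != const_mx b :> 'rV[R]_1.
Proof.
move=> ab; apply/eqP => /matrixP /(_ 0 0); rewrite !mxE => e.
by rewrite e eqxx in ab.
Qed.

Lemma rsub_in (u : 'rV[R]_(m + 1)) c (T : {fset 'rV[R]_m}) (f : 'rV[R]_m -> 'rV[R]_m) :
  u \in [fset row_mx (f v) (const_mx c : 'rV[R]_1) | v in T] -> rsubmx u = const_mx c.
Proof. by move=> /imfsetP [v _ ->]; rewrite row_mxKr. Qed.

Lemma card_part S : S != fset0 ->
  #|` diffset (pyr S)| = (#|` diffset S| + 2 * #|` S|)%N.
Proof.
move=> SN; rewrite DPeq //.
have n01 : (0 : R) != 1 by rewrite eq_sym oner_eq0.
have n0N : (0 : R) != -1 by rewrite eq_sym oppr_eq0 oner_eq0.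
have n1N : (1 : R) != -1.
  by rewrite -subr_eq0 opprK (pnatr_eq0 R 2).
rewrite disj; last first.
  move=> u H1 /rsub_in e2; case/fsetUP: H1 => /rsub_in e1; move: e2;
  rewrite e1 => /eqP; apply/negP; exact: const_neq.
rewrite disj; last first.
  move=> u /rsub_in e1 /rsub_in e2; move: e2;
  rewrite e1 => /eqP; apply/negP; exact: const_neq.
rewrite /A1 /A2 /A3 !card_imfset //=.
- by rewrite mul2n -addnn addnA.
- by move=> a b /eq_row_mx [].
- by move=> a b /eq_row_mx [/oppr_inj].
- by move=> a b /eq_row_mx [].
Qed.
Lemma Delta_ge0 n (T : {fset 'rV[R]_n}) : 0 <= Delta T.
Proof. exact: bigmax_ge_id. Qed.

Lemma Delta_ge n (T : {fset 'rV[R]_n}) (h : 'I_n -> 'rV[R]_n) :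
  (forall j, h j \in T) -> `|\det (\matrix_j h j)| <= Delta T.
Proof.
move=> hT.
case: (boolP (injectiveb h)) => [/injectiveP hi | /injectivePn [a [b ab e]]].
  pose f : {ffun 'I_n -> T} := [ffun j => [` hT j]].
  have fi : injectiveb f.
    by apply/injectiveP => a b /(congr1 val); rewrite !ffunE /= => /hi.
  apply: le_trans (le_bigmax_cond _ _ fi).
  rewrite -det_tr le_eqVlt; apply/orP; left; apply/eqP; congr (`|\det _|); apply/matrixP => i j.
  by rewrite !mxE ffunE.
rewrite (determinant_alternate ab) ?normr0 ?Delta_ge0 //.
by move=> j; rewrite !mxE e.
Qed.

Lemma Delta_le n (T : {fset 'rV[R]_n}) x :
  (forall h : 'I_n -> 'rV[R]_n, (forall j, h j \in T) ->
     `|\det (\matrix_j h j)| <= x) -> 0 <= x -> Delta T <= x.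
Proof.
move=> H x0; apply: bigmax_le => // f _.
have := H (fun j => val (f j)) (fun j => valP (f j)).
by rewrite -det_tr; congr (`|\det _| <= _); apply/matrixP => i j; rewrite !mxE.
Qed.

Definition cls S (a : 'rV[R]_m) (c : R) :=
  [\/ c = 0 /\ a \in diffset S, c = 1 /\ - a \in S | c = -1 /\ a \in S].

Lemma classify {S u} : S != fset0 -> u \in diffset (pyr S) ->
  u = row_mx (lsubmx u) (const_mx (u 0 (rshift m ord0))) /\
  cls S (lsubmx u) (u 0 (rshift m ord0)).
Proof.
move=> SN; rewrite DPeq //.
case/fsetUP => [/fsetUP [] | ] /imfsetP [v vS ->].
- by rewrite row_mxKl row_mxEr mxE; split => //; constructor 1.
- by rewrite row_mxKl row_mxEr mxE; split => //; constructor 2; rewrite opprK.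
- by rewrite row_mxKl row_mxEr mxE; split => //; constructor 3.
Qed.

Lemma ymem S a c a' c' : cls S a c -> cls S a' c' -> c' != 0 ->
  a - (c * c') *: a' \in diffset S.
Proof.
move=> H [[-> _]|[-> H']|[-> H']]; first by rewrite eqxx.
- move=> _; case: H => [[-> aS]|[-> aS]|[-> aS]].
  + by rewrite mul0r scale0r subr0.
  + apply/memDS; exists (- a'), (- a); split => //.
    by rewrite mul1r scale1r !opprK addrC.
  + apply/memDS; exists a, (- a'); split => //.
    by rewrite mulNr mul1r scaleN1r opprK.
- move=> _; case: H => [[-> aS]|[-> aS]|[-> aS]].
  + by rewrite mul0r scale0r subr0.
  + apply/memDS; exists a', (- a); split => //.
    by rewrite mul1r scaleN1r !opprK addrC.
  + apply/memDS; exists a, a'; split => //.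
    by rewrite mulrNN mul1r scale1r.
Qed.

Lemma mx_row_mx n p q (f : 'I_n -> 'rV[R]_p) (g : 'I_n -> 'rV[R]_q) :
  \matrix_j row_mx (f j) (g j) = row_mx (\matrix_j f j) (\matrix_j g j).
Proof.
apply/matrixP => i l; case: (splitP l) => l' e.
  have -> : l = lshift q l' by apply/val_inj.
  by rewrite mxE (row_mxEl (f i) (g i)) row_mxEl mxE.
have -> : l = rshift p l' by apply/val_inj.
by rewrite mxE (row_mxEr (f i) (g i)) row_mxEr mxE.
Qed.

Lemma Delta_upper S : S != fset0 ->
  Delta (diffset (pyr S)) <= Delta (diffset S).
Proof.
move=> SN; apply: Delta_le; last exact: Delta_ge0.
move=> h hP.
pose a j := lsubmx (h j); pose cc j := h j 0 (rshift m ord0).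
have hE j : h j = row_mx (a j) (const_mx (cc j)) by case: (classify SN (hP j)).
have hC j : cls S (a j) (cc j) by case: (classify SN (hP j)).
case: (pickP (fun j => cc j != 0)) => [k ck | c0]; last first.
  rewrite (expand_det_col _ (rshift m ord0)) big1 ?normr0 ?Delta_ge0 //.
  move=> j _; rewrite mxE -/(cc j); move: (c0 j) => /= /negbFE /eqP ->.
  by rewrite mul0r.
have ck2 : cc k * cc k = 1.
  by case: (hC k) => [[e _]|[-> _]|[-> _]]; rewrite ?mulr1 ?mulrNN ?mulr1 //; rewrite e eqxx in ck.
pose P := perm.tperm k (rshift m ord0).
have eP : `|\det (\matrix_j h j)| = `|\det (\matrix_j h (P j))|.
  have -> : \matrix_j h (P j) = row_perm P (\matrix_j h j).
    by apply/matrixP => i j; rewrite !mxE.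
  by rewrite row_permE det_mulmx det_perm normrM normrX normrN1 expr1n mul1r.
rewrite eP.
pose M := \matrix_j row_mx (a (P j) - (cc (P j) * cc k) *: a k) (const_mx (cc (P j)) : 'rV[R]_1).
pose L := block_mx 1%:M 0 (- cc k *: a k) (1%:M : 'M[R]_1).
have eM : \det (\matrix_j h (P j)) = \det M.
  have -> : M = (\matrix_j h (P j)) *m L.
    have -> : \matrix_j h (P j) = \matrix_j row_mx (a (P j)) (const_mx (cc (P j)) : 'rV[R]_1).
      by apply/matrixP => j l; rewrite mxE [RHS]mxE -hE.
    rewrite mx_row_mx mul_row_block.
    rewrite mulmx0 mulmx1 add0r mulmx1 /M mx_row_mx; congr row_mx.
    apply/matrixP => j i; rewrite !mxE big_ord1 !mxE.
    by rewrite mulNr mulrN mulrA.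
  by rewrite det_mulmx det_lblock !det1 !mulr1.
have ML j i : M j (lshift 1 i) = (a (P j) - (cc (P j) * cc k) *: a k) 0 i.
  by rewrite mxE (row_mxEl (a (P j) - (cc (P j) * cc k) *: a k) (const_mx (cc (P j)) : 'rV[R]_1)).
have MR j i : M j (rshift m i) = cc (P j).
  by rewrite mxE (row_mxEr (a (P j) - (cc (P j) * cc k) *: a k) (const_mx (cc (P j)) : 'rV[R]_1)) mxE.
rewrite eM -[M]submxK.
have -> : dlsubmx M = 0.
  apply/matrixP => i j; rewrite mxE mxE. apply: (etrans (ML (rshift m i) j)); rewrite (ord1 i) /P perm.tpermR ck2 scale1r subrr !mxE.
  done.
rewrite det_ublock normrM det_mx11 mxE mxE MR /P perm.tpermR.
have -> : `|cc k| = 1.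
  by case: (hC k) => [[e _]|[-> _]|[-> _]]; rewrite ?normrN ?normr1 //; rewrite e eqxx in ck.
rewrite mulr1.
pose y i := a (P (lshift 1 i)) - (cc (P (lshift 1 i)) * cc k) *: a k.
have -> : ulsubmx M = \matrix_i y i.
  by apply/matrixP => i j; rewrite mxE [LHS]mxE [usubmx _ _ _]mxE; exact: ML.
apply: (@Delta_ge m (diffset S) y) => i; exact: ymem (hC _) (hC k) ck.
Qed.

Lemma Delta_lower S : S != fset0 ->
  Delta (diffset S) <= Delta (diffset (pyr S)).
Proof.
move=> SN; have /fset0Pn [v0 v0S] := SN.
apply: Delta_le; last exact: Delta_ge0.
move=> g gD.
pose A := block_mx (\matrix_j g j) 0 (- v0) (const_mx 1 : 'M[R]_1) : 'M[R]_(m + 1).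
have := @Delta_ge (m + 1) (diffset (pyr S)) (fun j => row j A).
have -> : \matrix_j row j A = A.
  apply/matrixP => i j; by rewrite [LHS]mxE mxE.
rewrite /A det_lblock det_mx11 mxE mulr1; apply => j.
rewrite DPeq //; case: (splitP j) => j' e.
  have -> : j = lshift 1 j' by apply/val_inj.
  rewrite block_mxEv rowKu row_row_mx rowK row0.
  apply/fsetUP; left; apply/fsetUP; left; apply/imfsetP; exists (g j') => //.
have -> : j = rshift m j' by apply/val_inj.
rewrite block_mxEv rowKd row_row_mx !row_id.
by apply/fsetUP; left; apply/fsetUP; right; apply/imfsetP; exists v0.
Qed.
End S.

Theorem lemma5p4 (R : realType) (m : nat) (S : {fset 'rV[R]_m}) :
  S != fset0 ->
  #|` diffset (pyr S)| = (#|` diffset S| + 2 * #|` S|)%N /\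
  Delta (diffset (pyr S)) = Delta (diffset S).
Proof.
move=> SN; split; first exact: card_part.
by apply/le_anti; rewrite Delta_upper // Delta_lower.
Qed.
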